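(* Let $m,n\ge0$, $0\le k\le\min(m,n)$, and let $i,j$ be integers with $0\le i\le m$, $0\le j\le n$ and $k<i+j\le m+n-k$. Then $$c_{m,n,k}(i,j)=c_{m,n,k}(i,j-1)+c_{m,n,k}(i-1,j),$$ with the convention that $c_{m,n,k}(a,b)=0$ whenever $(a,b)$ does not satisfy $0\le a\le m$, $0\le b\le n$, $k\le a+b\le m+n-k$.
   Context: Let $e,f,h$ be the standard basis of $\mathfrak{sl}(2,\mathbb{C})$. $V(n)$ is the irreducible representation of highest weight $n$ with fixed highest weight vector $\phi_n$; $\{f^i\phi_n\}_{0\le i\le n}$ is a basis, $f^{n+1}\phi_n=0$. $\mathfrak{sl}(2)$ acts on $V(m)\otimes V(n)$ by $X(v\otimes w)=Xv\otimes w+v\otimes Xw$. For $0\le k\le\min(m,n)$, $\phi_{m,n,k}=\sum_{l=0}^{k}(-1)^l\binom{m-l}{k-l}\binom{n-k+l}{l} f^l\phi_m\otimes f^{k-l}\phi_n$ (a highest weight vector of weight $m+n-2k$). The coordinates $c_{m,n,k}(i,j)$ are defined by $f^{p-k}\phi_{m,n,k}=\sum_{i+j=p,\,0\le i\le m,\,0\le j\le n} c_{m,n,k}(i,j)\, f^i\phi_m\otimes f^j\phi_n$ for $k\le p\le m+n-k$. *)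

(* Defs.v *)
(* Coefficients in algC (algebraic complex numbers) standing for C. *)
From HB Require Import structures.
From mathcomp Require Import all_boot all_order all_algebra all_field.
Set Implicit Arguments. Unset Strict Implicit. Unset Printing Implicit Defensive.
Import Order.TTheory GRing.Theory Num.Theory.
Local Open Scope ring_scope.

(* An element of V(m) (x) V(n) is represented by its coordinate function
   (a, b) |-> coefficient of f^a phi_m (x) f^b phi_n; only coordinates with
   a <= m, b <= n are meaningful (the others are kept at 0). *)
Definition tvec := nat -> nat -> algC.

(* action of f on V(m) (x) V(n):
   f (f^a phi_m (x) f^b phi_n) = f^(a+1) phi_m (x) f^b phi_n + f^a phi_m (x) f^(b+1) phi_n,
   with f^(m+1) phi_m = 0 and f^(n+1) phi_n = 0. *)
Definition fop (m n : nat) (v : tvec) : tvec := fun a b =>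
  if (a <= m)%N && (b <= n)%N then
    (if a is a'.+1 then v a' b else 0) + (if b is b'.+1 then v a b' else 0)
  else 0.

(* phi_{m,n,k} = sum_{l=0}^k (-1)^l C(m-l,k-l) C(n-k+l,l) f^l phi_m (x) f^(k-l) phi_n *)
Definition phi_mnk (m n k : nat) : tvec := fun a b =>
  if [&& (a + b == k)%N, (a <= k)%N, (a <= m)%N & (b <= n)%N] then
    (-1) ^+ a * ('C(m - a, k - a))%:R * ('C(n - k + a, a))%:R
  else 0.

(* c_{m,n,k}(a,b): coordinate of f^a phi_m (x) f^b phi_n in f^(a+b-k) phi_{m,n,k}
   when (a,b) is in the admissible region, and 0 otherwise (convention). *)
Definition cmnk (m n k : nat) (a b : int) : algC :=
  match a, b with
  | Posz a', Posz b' =>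
      if [&& (a' <= m)%N, (b' <= n)%N, (k <= a' + b')%N & (a' + b' <= m + n - k)%N]
      then iter (a' + b' - k) (fop m n) (phi_mnk m n k) a' b'
      else 0
  | _, _ => 0
  end.

(* Main.v *)
Require Import Defs.
From HB Require Import structures.
From mathcomp Require Import all_boot all_order all_algebra all_field.
From mathcomp Require Import zify.
Import Order.TTheory GRing.Theory Num.Theory.
Local Open Scope ring_scope.

Lemma PoszS1 (j : nat) : (Posz j.+1 - 1 = Posz j)%R.
Proof. by rewrite -addn1 PoszD addrK. Qed.

Lemma cE m n k (a b : nat) : (a <= m)%N -> (b <= n)%N -> (k <= a + b)%N ->
  (a + b <= m + n - k)%N ->
  cmnk m n k (Posz a) (Posz b) = iter (a + b - k) (fop m n) (phi_mnk m n k) a b.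
Proof. by move=> h1 h2 h3 h4; rewrite /cmnk h1 h2 h3 h4. Qed.

Lemma fopE m n v a b : (a <= m)%N -> (b <= n)%N ->
  fop m n v a b = (if a is a'.+1 then v a' b else 0) + (if b is b'.+1 then v a b' else 0).
Proof. by move=> h1 h2; rewrite /fop h1 h2. Qed.

Lemma cneg m n k (a : int) : cmnk m n k a (Posz 0 - 1) = 0.
Proof. by case: a. Qed.

Lemma cneg2 m n k (b : int) : cmnk m n k (Posz 0 - 1) b = 0.
Proof. by []. Qed.

Lemma iterP m n k p q a b : p = q ->
  iter p (fop m n) (phi_mnk m n k) a b = iter q (fop m n) (phi_mnk m n k) a b.
Proof. by move->. Qed.

Theorem proposition7p1 (m n k i j : nat) :
  (k <= minn m n)%N -> (i <= m)%N -> (j <= n)%N ->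
  (k < i + j)%N -> (i + j <= m + n - k)%N ->
  cmnk m n k (Posz i) (Posz j) =
    cmnk m n k (Posz i) (Posz j - 1) + cmnk m n k (Posz i - 1) (Posz j).
Proof.
move=> hk hi hj hlt hle.
have hp : (i + j - k = (i + j - k).-1.+1)%N by rewrite prednK // subn_gt0.
rewrite cE // ?(ltnW hlt) // hp iterS fopE // addrC.
have hp' : ((i + j - k).-1 = i + j - 1 - k)%N by lia.
rewrite hp'.
case: i hi hlt hle hp hp' => [|i] hi hlt hle hp hp'; case: j hj hlt hle hp hp' => [|j] hj hlt hle hp hp'.
- by rewrite ltn0 in hlt.
- rewrite cneg2 PoszS1 cE; try lia.
  rewrite ?[LHS]add0r ?[RHS]add0r ?[LHS]addr0 ?[RHS]addr0.
  apply: iterP; lia.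
- rewrite cneg PoszS1 cE; try lia.
  rewrite ?[LHS]add0r ?[RHS]add0r ?[LHS]addr0 ?[RHS]addr0.
  apply: iterP; lia.
- rewrite !PoszS1 cE; try lia.
  rewrite cE; try lia.
  congr (_ + _); apply: iterP; lia.
Qed.
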